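(* Let $w\in\mathbb Q$ with $w>-\mu_\kappa$, and let $k\in\{1,\dots,\kappa\}$ be such that $-\mu_k\leq w<-\mu_{k-1}$ (convention $\mu_0=-\infty$). Then $\epsilon(w)$ is greater than or equal to the minimum of the set $$\{\epsilon(w')\,\ell^{d_{w,w'}-\alpha_{k-1}}: w'\in\Delta(w)\}\cup\{-\mu_{k-1}-w,\ \min(\pi(\Psi(w))\setminus\{w\})-w\},$$ where $\min\emptyset=+\infty$ and $d_{w,w'}=\min\{\alpha\in\{0,\dots,n\}:\exists(\ell^\alpha,\beta)\in\mathcal P(L),\ w'=\frac{\psi(w)-\beta}{\ell^\alpha}\}$; this minimum is a positive element of $\mathbb Q_{>0}\cup\{+\infty\}$.
   Context: Let $\mathbf K$ be a field and $\ell\geq 2$ an integer. Let $L=a_n\phi_\ell^n+\dots+a_0$ with $n\geq1$, $a_i\in\mathbf K[z]$, $a_0a_n\neq0$, where $\phi_\ell(f)(z)=f(z^\ell)$ acting on Hahn series with coefficients in $\mathbf K$ and value group $\mathbb Q$. Let $\mathcal P(L)=\{(\ell^i,j): 0\le i\le n,\ j\in\operatorname{supp} a_i\}$. The Newton polygon of $L$ is the convex hull of $\{(\ell^i,j): 0\le i\le n,\ j\geq\operatorname{val} a_i\}\subset\mathbb R^2$; its non-vertical edges have slopes $\mu_1<\dots<\mu_\kappa$, $\mathcal S(L)=\{\mu_1,\dots,\mu_\kappa\}$; its vertices ordered by increasing abscissa are $p_0,\dots,p_\kappa$ with $p_k=(\ell^{\alpha_k},\beta_k)$, $\beta_k=\operatorname{val}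 a_{\alpha_k}$, the edge of slope $\mu_k$ joining $p_{k-1}$ and $p_k$. Define $\Psi(v)=\{v\ell^i+j:(\ell^i,j)\in\mathcal P(L)\}$, $\psi(v)=\min\Psi(v)$, $\pi(q)=\max\{(q-j)/\ell^i:(\ell^i,j)\in\mathcal P(L)\}$, and $\Delta(w)=\left\{\frac{\psi(w)-\beta}{\ell^\alpha}:(\ell^\alpha,\beta)\in\mathcal P(L)\right\}\setminus\{w\}$. Let $\mathcal V_0=-\mathcal S(L)$, $\mathcal V_{i+1}=\bigcup_{v\in\mathcal V_i}\pi(\Psi(v))$, $\mathcal V=\bigcup_{i\ge0}\mathcal V_i$ (a well-ordered set). For $v\in\mathbb Q$ let $\epsilon(v)=\min\{u\in\mathcal V: u>v\}-v\in\mathbb Q_{>0}\cup\{+\infty\}$ ($+\infty$ if the set is empty). *)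

(* Defs.v *)
From HB Require Import structures.
From mathcomp Require Import all_boot all_order all_algebra.
From mathcomp Require Import all_classical all_reals ereal.
Set Implicit Arguments. Unset Strict Implicit. Unset Printing Implicit Defensive.
Import Order.TTheory GRing.Theory Num.Theory.
Local Open Scope ring_scope.

Section MahlerDefs.
Variables (K : fieldType) (l n : nat) (a : nat -> {poly K}).
(* The operator L = a_n phi_l^n + ... + a_0 is encoded by l, n and the
   coefficients a 0, ..., a n (values of a beyond n are ignored). *)

Definition valp (p : {poly K}) : nat := find (fun c => c != 0) p.

Definition suppp (p : {poly K}) : seq nat :=
  [seq j <- iota 0 (size p) | p`_j != 0].

(* P(L): the pair (i, j) stands for the point (l^i, j) *)
Definition PL : seq (nat * nat) :=
  [seq (i, j) | i <- iota 0 n.+1, j <- suppp (a i)].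

Definition lpow (i : nat) : rat := (l ^ i)%:R.

(* indices i with a_i <> 0; the polygon is the convex hull of the points
   (l^i, j), j >= val a_i, whose lower boundary has vertices among
   (l^i, val a_i) *)
Definition nzidx : seq nat := [seq i <- iota 0 n.+1 | a i != 0].

Definition hval (mu : rat) (i : nat) : rat := (valp (a i))%:R - mu * lpow i.

(* indices of the points (l^i, val a_i) lying on the supporting line of
   slope mu (the line of slope mu touching the polygon from below),
   in increasing order of abscissa *)
Definition touch (mu : rat) : seq nat :=
  [seq i <- nzidx | all (fun j => hval mu i <= hval mu j) nzidx].

(* a non-vertical edge of slope mu exists iff the supporting line of slope
   mu meets the polygon in at least two distinct points (l^i, val a_i);
   any such slope is the slope between two of these points *)
Definition cand_slopes : seq rat :=
  [seq ((valp (a j))%:R - (valp (a i))%:R) / (lpow j - lpow i)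
     | i <- nzidx, j <- [seq j <- nzidx | (i < j)%N]].

Definition slopes : seq rat :=
  sort <=%R (undup [seq mu <- cand_slopes | (1 < size (touch mu))%N]).

Definition kappa : nat := size slopes.

Definition mu (k : nat) : rat := nth 0 slopes k.-1.

(* alpha_{k-1}: exponent of the left endpoint p_{k-1} of the edge of slope mu_k *)
Definition alpha_left (k : nat) : nat := head 0%N (touch (mu k)).

Definition smin (s : seq rat) : rat := foldr Order.min (head 0 s) s.
Definition smax (s : seq rat) : rat := foldr Order.max (head 0 s) s.

Definition Psi (v : rat) : seq rat :=
  [seq v * lpow p.1 + (p.2)%:R | p <- PL].
Definition psi (v : rat) : rat := smin (Psi v).
Definition pi (q : rat) : rat :=
  smax [seq (q - (p.2)%:R) / lpow p.1 | p <- PL].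
Definition piPsi (v : rat) : seq rat := [seq pi q | q <- Psi v].

Definition Delta (w : rat) : seq rat :=
  [seq x <- [seq (psi w - (p.2)%:R) / lpow p.1 | p <- PL] | x != w].

Definition dww (w w' : rat) : nat :=
  \big[minn/n]_(p <- PL | w' == (psi w - (p.2)%:R) / lpow p.1) p.1.

Fixpoint Vi (i : nat) : seq rat :=
  match i with
  | 0 => [seq - m | m <- slopes]
  | i.+1 => flatten [seq piPsi v | v <- Vi i]
  end.

Definition inV (u : rat) : Prop := exists i, u \in Vi i.

(* epsilon(v) = min {u in V : u > v} - v, +oo if the set is empty.
   Computed as an infimum in the extended reals (V is well ordered, so
   this infimum is the minimum). *)
Definition eps (R : realType) (v : rat) : \bar R :=
  ereal_inf [set ((ratr (u - v) : R))%:E | u in [set u | inV u /\ v < u]].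

End MahlerDefs.

(* Main.v *)
Require Import Defs.
From HB Require Import structures.
From mathcomp Require Import all_boot all_order all_algebra.
From mathcomp Require Import all_classical all_reals ereal.
From mathcomp Require Import ring lra zify.
Set Implicit Arguments. Unset Strict Implicit. Unset Printing Implicit Defensive.
Import Order.TTheory GRing.Theory Num.Theory.
Local Open Scope ring_scope.

Lemma min_nat (P : nat -> Prop) : (exists n, P n) -> exists n, P n /\ forall m, P m -> (n <= m)%N.
Proof.
move=> [n Pn].
have ex : exists n, `[< P n >] by exists n; apply/asboolP.
case: (ex_minnP ex) => m /asboolP Pm Hm; exists m; split => // k Pk.
by apply: Hm; apply/asboolP.
Qed.

Lemma unif_bound (T : eqType) (cs : seq T) (Q : nat -> T -> Prop) :
  (forall c, c \in cs -> exists N, forall m, (N <= m)%N -> ~ Q m c) ->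
  exists N, forall c, c \in cs -> forall m, (N <= m)%N -> ~ Q m c.
Proof.
elim: cs => [|c cs IH] H; first by exists 0%N.
have [N1 HN1] := H c (mem_head _ _).
have [N2 HN2] : exists N, forall c', c' \in cs -> forall m, (N <= m)%N -> ~ Q m c'.
  by apply: IH => c' c'in; apply: H; rewrite in_cons c'in orbT.
exists (maxn N1 N2) => c' ; rewrite in_cons => /orP [/eqP ->|c'in] m Hm.
  by apply: HN1; apply: leq_trans Hm; rewrite leq_maxl.
by apply: HN2 => //; apply: leq_trans Hm; rewrite leq_maxr.
Qed.

Lemma pigeon (T : eqType) (cs : seq T) (Q : nat -> T -> Prop) :
  (forall m, exists c, c \in cs /\ Q m c) ->
  exists c, c \in cs /\ forall N, exists m, (N <= m)%N /\ Q m c.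
Proof.
move=> H; apply: contrapT => Hn.
have [N HN] : exists N, forall c, c \in cs -> forall m, (N <= m)%N -> ~ Q m c.
  apply: unif_bound => c cin; apply: contrapT => H1; apply: Hn; exists c; split => //.
  move=> N; apply: contrapT => H2; apply: H1; exists N => m Nm Qm.
  by apply: H2; exists m.
have [c [cin Qc]] := H N; exact: (HN c cin N (leqnn N) Qc).
Qed.

Section WO.
Variables (V : nat -> rat -> Prop) (G : seq (nat * nat)) (g : nat * nat -> rat -> rat)
  (V0 : seq rat).
Hypothesis hV0 : forall u, V 0%N u -> u \in V0.
Hypothesis hdec : forall d u, V d.+1 u -> exists p, p \in G /\ exists v, V d v /\ u = g p v.
Hypothesis hmono : forall p x y, p \in G -> x <= y -> g p x <= g p y.
Hypothesis hinfl : forall p x, p \in G -> x <= g p x.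

Let inV u := exists d, V d u.
Let Bad (s : seq rat) := exists h : nat -> rat, (forall m, inV (h m)) /\
  (forall m, h m.+1 < h m) /\ (forall m, (m < size s)%N -> h m = nth 0 s m).
Let Pmin (s : seq rat) (ud : rat * nat) := Bad (rcons s ud.1) /\ V ud.2 ud.1 /\
  forall u' d', Bad (rcons s u') -> V d' u' -> (ud.2 <= d')%N.

Lemma decr_gen (h : nat -> rat) : (forall m, h m.+1 < h m) ->
  forall m m', (m < m')%N -> h m' < h m.
Proof.
move=> Hd m m'; elim: m' => // m' IH; rewrite ltnS leq_eqVlt => /orP [/eqP ->|].
  exact: Hd.
by move=> /IH; apply: lt_trans.
Qed.

Lemma Pmin_ex s : Bad s -> exists ud, Pmin s ud.
Proof.
move=> [h [hV [hd hs]]].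
have ex : exists d, exists u, Bad (rcons s u) /\ V d u.
  have [d Hd] := hV (size s); exists d, (h (size s)); split => //.
  exists h; split => //; split => // m; rewrite size_rcons ltnS leq_eqVlt.
  case/orP => [/eqP ->|lt]; first by rewrite nth_rcons ltnn eqxx.
  by rewrite nth_rcons lt; apply: hs.
have [d [[u [Bu Vu]] Hmin]] := min_nat ex.
exists (u, d); split => //; split => // u' d' Bu' Vu'.
by apply: Hmin; exists u'.
Qed.

Let nxt (s : seq rat) : rat * nat := xget (0, 0%N) (Pmin s).
Fixpoint pre (m : nat) : seq rat :=
  if m is m'.+1 then rcons (pre m') (nxt (pre m')).1 else [::].
Let hs m := (nxt (pre m)).1.
Let ds m := (nxt (pre m)).2.

Lemma no_decr : ~ exists h : nat -> rat, (forall m, inV (h m)) /\ (forall m, h m.+1 < h m).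
Proof.
move=> [h0 [h0V h0d]].
have Bad0 : Bad [::] by exists h0.
have preP : forall m, Bad (pre m) /\ size (pre m) = m /\ Pmin (pre m) (nxt (pre m)).
  elim => [|m [Bm [Sm Pm]]].
    by split => //; split => //; apply: xgetPex; apply: Pmin_ex.
  have Bm1 : Bad (pre m.+1) by case: Pm.
  split => //; split; first by rewrite /= size_rcons Sm.
  by apply: xgetPex; apply: Pmin_ex.
have nth_pre : forall m j, (j < m)%N -> nth 0 (pre m) j = hs j.
  elim => // m IH j; rewrite ltnS leq_eqVlt => /orP [/eqP ->|lt] /=.
    by rewrite nth_rcons (proj1 (proj2 (preP m))) ltnn eqxx.
  by rewrite nth_rcons (proj1 (proj2 (preP m))) lt IH.
have hsV : forall m, V (ds m) (hs m) by move=> m; case: (preP m) => _ [_ [_ []]].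
have hsd1 : forall m, hs m.+1 < hs m.
  move=> m; have [[h [_ [hd hh]]] [Sz _]] := preP m.+2.
  by have := hd m; rewrite !hh ?Sz // !nth_pre.
have hsd := decr_gen hsd1.
set cs := None :: [seq Some p | p <- G].
set Q := fun m (c : option (nat * nat)) =>
  (c = None /\ ds m = 0%N) \/
  (exists p, c = Some p /\ p \in G /\ (0 < ds m)%N /\ exists v, V (ds m).-1 v /\ hs m = g p v).
have HQ : forall m, exists c, c \in cs /\ Q m c.
  move=> m; case E: (ds m) => [|d].
    by exists None; split; [exact: mem_head| left].
  have := hsV m; rewrite E => /hdec [p [pin [v [Vv Ev]]]].
  exists (Some p); split; first by rewrite in_cons map_f ?orbT.
  by right; exists p; split => //; split => //; rewrite E; split => //; exists v.
have [c [_ Hc]] := pigeon HQ.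
pose sg N := xget 0%N (fun m => (N <= m)%N /\ Q m c).
have sgP : forall N, (N <= sg N)%N /\ Q (sg N) c by move=> N; exact: (xgetPex 0%N (Hc N)).
pose fix sig j := if j is j'.+1 then sg (sig j').+1 else sg 0%N.
have sigQ : forall j, Q (sig j) c by case => [|j] /=; [case: (sgP 0%N)|case: (sgP (sig j).+1)].
have siglt : forall j, (sig j < sig j.+1)%N by move=> j /=; case: (sgP (sig j).+1).
have sigd : forall j, hs (sig j.+1) < hs (sig j) by move=> j; apply: hsd.
have sigdg := decr_gen sigd.
case Ec: c => [p|]; rewrite Ec in sigQ.
- have Hv : forall j, exists v, V (ds (sig j)).-1 v /\ hs (sig j) = g p v /\ p \in G /\ (0 < ds (sig j))%N.
    move=> j; case: (sigQ j) => [[]//|[p' [[<-] [pin [pos [v [Vv Ev]]]]]]].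
    by exists v.
  pose vv j := xget 0 (fun v => V (ds (sig j)).-1 v /\ hs (sig j) = g p v /\ p \in G /\ (0 < ds (sig j))%N).
  have vvP : forall j, V (ds (sig j)).-1 (vv j) /\ hs (sig j) = g p (vv j) /\ p \in G /\ (0 < ds (sig j))%N.
    by move=> j; exact: (xgetPex 0 (Hv j)).
  set m0 := sig 0%N.
  pose h' m := if (m < m0)%N then hs m else vv (m - m0)%N.
  have Bb : Bad (rcons (pre m0) (vv 0%N)).
    exists h'; split.
      move=> m; rewrite /h'; case: ifP => _; first by exists (ds m).
      by exists (ds (sig (m - m0)%N)).-1; case: (vvP (m - m0)%N).
    split.
      move=> m; rewrite /h'; case: ltnP => Hm1; case: ltnP => Hm2.
      + exact: hsd1.
      + by exfalso; lia.
      + have Em : m.+1 = m0 by lia.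
        rewrite -Em subnn; case: (vvP 0%N) => _ [E1 [pin _]].
        apply: (le_lt_trans (hinfl (vv 0%N) pin)); rewrite -E1 -/m0 -Em; exact: hsd1.
      + rewrite subSn //; set j := (m - m0)%N.
        case: (vvP j) => _ [E1 [pin _]]; case: (vvP j.+1) => _ [E2 _].
        rewrite ltNge; apply/negP => Hle.
        have := hmono pin Hle; rewrite -E1 -E2 => Hle2.
        by move: (sigd j); rewrite ltNge Hle2.
    move=> m; rewrite size_rcons (proj1 (proj2 (preP m0))) ltnS leq_eqVlt => /orP [/eqP ->|lt].
      by rewrite /h' ltnn subnn nth_rcons (proj1 (proj2 (preP m0))) ltnn eqxx.
    by rewrite /h' lt nth_rcons (proj1 (proj2 (preP m0))) lt nth_pre.
  case: (preP m0) => _ [_ [_ [_ Hm]]].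
  case: (vvP 0%N) => V0v [_ [_ pos]].
  have := Hm _ _ Bb V0v; rewrite -/(ds m0).
  by case: (ds m0) pos => [|d] //=; rewrite ltnn.
- pose L := [seq hs (sig j) | j <- iota 0 (size V0).+1].
  have uL : uniq L.
    rewrite map_inj_uniq ?iota_uniq // => j1 j2 E.
    apply/eqP; case: (ltngtP j1 j2) => // H; exfalso.
    + by move: (sigdg _ _ H); rewrite E ltxx.
    + by move: (sigdg _ _ H); rewrite E ltxx.
  have sL : {subset L <= V0}.
    move=> x /mapP [j _ ->]; apply: hV0.
    case: (sigQ j) => [[_ E]|[p [//]]].
    by have := hsV (sig j); rewrite E.
  by have := uniq_leq_size uL sL; rewrite size_map size_iota ltnn.
Qed.

Lemma WO_min v : (exists u, inV u /\ v < u) ->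
  exists u, inV u /\ v < u /\ forall u', inV u' -> v < u' -> u <= u'.
Proof.
move=> [u0 [Vu0 vu0]]; apply: contrapT => Hn.
have step : forall u, inV u /\ v < u -> exists u', inV u' /\ v < u' /\ u' < u.
  move=> u [Vu vu]; apply: contrapT => H1; apply: Hn; exists u; split => //; split => //.
  move=> u' Vu' vu'; rewrite leNgt; apply/negP => lt; apply: H1; by exists u'.
pose nx u := xget 0 (fun u' => inV u' /\ v < u' /\ u' < u).
pose fix h m := if m is m'.+1 then nx (h m') else u0.
have hP : forall m, inV (h m) /\ v < h m.
  elim => //= m [Vm vm]; have [? [? _]] := xgetPex 0 (step _ (conj Vm vm)); by split.
apply: no_decr; exists h; split; first by move=> m; case: (hP m).
by move=> m /=; have [_ [_ ?]] := xgetPex 0 (step _ (hP m)).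
Qed.

End WO.

Lemma foldr_max_ge (x0 : rat) s x : x \in x0 :: s -> x <= foldr Order.max x0 s.
Proof.
elim: s => [|y s IH]; first by rewrite mem_seq1 => /eqP ->.
rewrite /= le_max !in_cons => /orP [xx0|/orP [/eqP ->|xs]].
- by rewrite IH ?orbT // in_cons xx0.
- by rewrite lexx.
- by rewrite IH ?orbT // in_cons xs orbT.
Qed.

Lemma foldr_max_mem (x0 : rat) s : foldr Order.max x0 s \in x0 :: s.
Proof.
elim: s => [|y s IH]; first exact: mem_head.
rewrite /= maxEle; case: ifP => _; last by rewrite !in_cons eqxx orbT.
by move: IH; rewrite !in_cons => /orP [->|->]; rewrite ?orbT.
Qed.

Lemma foldr_min_le (x0 : rat) s x : x \in x0 :: s -> foldr Order.min x0 s <= x.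
Proof.
elim: s => [|y s IH]; first by rewrite mem_seq1 => /eqP ->.
rewrite /= ge_min !in_cons => /orP [xx0|/orP [/eqP ->|xs]].
- by rewrite IH ?orbT // in_cons xx0.
- by rewrite lexx.
- by rewrite IH ?orbT // in_cons xs orbT.
Qed.

Lemma foldr_min_mem (x0 : rat) s : foldr Order.min x0 s \in x0 :: s.
Proof.
elim: s => [|y s IH]; first exact: mem_head.
rewrite /= minEle; case: ifP => _; first by rewrite !in_cons eqxx orbT.
by move: IH; rewrite !in_cons => /orP [->|->]; rewrite ?orbT.
Qed.

Lemma smax_ge s x : x \in s -> x <= smax s.
Proof. by move=> xs; apply: foldr_max_ge; rewrite in_cons xs orbT. Qed.
Lemma smax_mem s : s != [::] -> smax s \in s.
Proof.
case: s => // y s _; have := foldr_max_mem y (y :: s).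
by rewrite /smax /= in_cons => /orP [/eqP {1}->|]; rewrite ?mem_head.
Qed.
Lemma smin_le s x : x \in s -> smin s <= x.
Proof. by move=> xs; apply: foldr_min_le; rewrite in_cons xs orbT. Qed.
Lemma smin_mem s : s != [::] -> smin s \in s.
Proof.
case: s => // y s _; have := foldr_min_mem y (y :: s).
by rewrite /smin /= in_cons => /orP [/eqP {1}->|]; rewrite ?mem_head.
Qed.

Section Mahler.
Variables (K : fieldType) (l n : nat) (a : nat -> {poly K}).
Hypothesis hl : (2 <= l)%N.
Hypothesis ha0 : a 0%N != 0.

Local Notation PL := (@PL K n a).
Local Notation lpow := (lpow l).
Local Notation nzidx := (@nzidx K n a).

Lemma mem_suppp (p : {poly K}) j : (j \in suppp p) = (j < size p)%N && (p`_j != 0).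
Proof. by rewrite /suppp mem_filter mem_iota add0n andbC. Qed.

Lemma valp_le (p : {poly K}) j : p`_j != 0 -> (valp p <= j)%N.
Proof.
move=> pj; rewrite leqNgt; apply/negP => /(before_find 0) /=.
by rewrite pj.
Qed.

Lemma valp_supp (p : {poly K}) : p != 0 -> valp p \in suppp p.
Proof.
move=> p0; have hs : has (fun c => c != 0) p.
  apply/hasP; exists (lead_coef p); last by rewrite lead_coef_eq0.
  by rewrite lead_coefE mem_nth // prednK // size_poly_gt0.
rewrite mem_suppp -has_find hs /=.
exact: (nth_find 0 hs).
Qed.

Lemma memPL i j : ((i, j) \in PL) = (i <= n)%N && (j \in suppp (a i)).
Proof.
apply/allpairsPdep/andP.
  by move=> [x [y [xin yin [-> ->]]]]; split => //; move: xin; rewrite mem_iota.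
by move=> [ilt jin]; exists i, j; split => //; rewrite mem_iota.
Qed.

Lemma mem_nzidx i : (i \in nzidx) = (i <= n)%N && (a i != 0).
Proof. by rewrite /nzidx mem_filter mem_iota andbC. Qed.

Lemma PL_nz i j : (i, j) \in PL -> i \in nzidx /\ (valp (a i) <= j)%N.
Proof.
rewrite memPL mem_suppp => /andP [ilt /andP [_ aj]].
split; last exact: valp_le.
rewrite mem_nzidx ilt; apply/eqP => E; by move: aj; rewrite E coef0 eqxx.
Qed.

Lemma nzidx_PL i : i \in nzidx -> (i, valp (a i)) \in PL.
Proof. by rewrite mem_nzidx memPL => /andP [-> /valp_supp ->]. Qed.

Lemma PL_ne : PL != [::].
Proof.
have : (0%N, valp (a 0%N)) \in PL by apply: nzidx_PL; rewrite mem_nzidx ha0.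
by case: (PL).
Qed.

Lemma lpow_gt0 i : 0 < lpow i.
Proof. by rewrite /Defs.lpow ltr0n expn_gt0; case: l hl. Qed.

Lemma lpow_lt i j : (i < j)%N -> lpow i < lpow j.
Proof. by move=> ij; rewrite /Defs.lpow ltr_nat ltn_exp2l. Qed.

Lemma lpowE i : lpow i = (l%:R : rat) ^+ i.
Proof. by rewrite /Defs.lpow natrX. Qed.

Lemma psi_le v p : p \in PL -> psi l n a v <= v * lpow p.1 + (p.2)%:R.
Proof. by move=> pin; apply: smin_le; apply: map_f. Qed.

Lemma psi_mem v : exists2 p, p \in PL & psi l n a v = v * lpow p.1 + (p.2)%:R.
Proof.
have : psi l n a v \in Psi l n a v.
  by apply: smin_mem; rewrite /Psi; case: (PL) PL_ne.
by move=> /mapP [p pin ->]; exists p.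
Qed.

Lemma pi_ge q p : p \in PL -> (q - (p.2)%:R) / lpow p.1 <= Defs.pi l n a q.
Proof. by move=> pin; apply: smax_ge; apply: (map_f (fun p => (q - (p.2)%:R) / lpow p.1)). Qed.

Lemma pi_mem q : exists2 p, p \in PL & Defs.pi l n a q = (q - (p.2)%:R) / lpow p.1.
Proof.
have : Defs.pi l n a q \in [seq (q - (p.2)%:R) / lpow p.1 | p <- PL].
  by apply: smax_mem; case: (PL) PL_ne.
by move=> /mapP [p pin ->]; exists p.
Qed.

Lemma pi_mono q q' : q <= q' -> Defs.pi l n a q <= Defs.pi l n a q'.
Proof.
move=> qq; have [p pin ->] := pi_mem q; apply: le_trans (pi_ge q' pin).
by rewrite ler_pM2r ?invr_gt0 ?lpow_gt0 // lerD2r.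
Qed.

Definition gmap (p : nat * nat) (v : rat) := Defs.pi l n a (v * lpow p.1 + (p.2)%:R).

Lemma gmap_mono p x y : x <= y -> gmap p x <= gmap p y.
Proof. by move=> xy; apply: pi_mono; rewrite lerD2r ler_pM2r ?lpow_gt0. Qed.

Lemma gmap_infl p x : p \in PL -> x <= gmap p x.
Proof.
move=> pin; apply: le_trans (pi_ge _ pin); rewrite addrK mulfK //.
by rewrite gt_eqF ?lpow_gt0.
Qed.

Lemma Vi_dec d u : u \in Vi l n a d.+1 ->
  exists p, p \in PL /\ exists v, v \in Vi l n a d /\ u = gmap p v.
Proof.
move=> /flattenP [s /mapP [v0 v0in Es]]; rewrite Es => /mapP [q /mapP [p pin Eq] Eu].
by exists p; split => //; exists v0; rewrite Eu Eq.
Qed.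

Lemma V_min v : (exists u, inV l n a u /\ v < u) ->
  exists u, inV l n a u /\ v < u /\ forall u', inV l n a u' -> v < u' -> u <= u'.
Proof.
apply: (@WO_min (fun d u => u \in Vi l n a d) PL gmap (Vi l n a 0)) => //.
- move=> d u /Vi_dec [p [pin [v0 [v0in ->]]]]; exists p; split => //; by exists v0.
- by move=> p x y _; apply: gmap_mono.
- by move=> p x; apply: gmap_infl.
Qed.

Lemma eps_val (R : realType) v :
  ((forall u, inV l n a u -> ~ v < u) /\ eps l n a R v = +oo%E) \/
  (exists u, inV l n a u /\ v < u /\ (forall u', inV l n a u' -> v < u' -> u <= u') /\
     eps l n a R v = (ratr (u - v) : R)%:E).
Proof.
case: (pselect (exists u, inV l n a u /\ v < u)) => [ex|nex].
  right; have [u [Vu [vu Hu]]] := V_min ex; exists u; split => //; split => //; split => //.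
  apply/eqP; rewrite eq_le; apply/andP; split.
    by apply: ereal_inf_lbound; exists u.
  apply/ereal_infP => y [u' [Vu' vu'] <-].
  by rewrite lee_fin ler_rat lerD2r; apply: Hu.
left; split; first by move=> u Vu vu; apply: nex; exists u.
apply/eqP; rewrite eq_le leey /=; apply/ereal_infP => y [u' [Vu' vu'] _].
by exfalso; apply: nex; exists u'.
Qed.

End Mahler.

Section Main.
Variables (K : fieldType) (l n : nat) (a : nat -> {poly K}).
Hypothesis hl : (2 <= l)%N.
Hypothesis ha0 : a 0%N != 0.

Local Notation PL := (@PL K n a).
Local Notation lpow := (lpow l).
Local Notation nzidx := (@nzidx K n a).

Lemma slopes_sorted : sorted <=%R (slopes l n a).
Proof. by apply: sort_sorted; exact: le_total. Qed.

Lemma mu_slope k : (1 <= k <= kappa l n a)%N -> Defs.mu l n a k \in slopes l n a.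
Proof. by move=> /andP [k1 kk]; apply: mem_nth; move: kk k1; rewrite /kappa; case: k. Qed.

Lemma slope_touch mu0 : mu0 \in slopes l n a -> (1 < size (touch l n a mu0))%N.
Proof. by rewrite /slopes mem_sort mem_undup mem_filter => /andP []. Qed.

Lemma alpha_pt k w : (1 <= k <= kappa l n a)%N -> - Defs.mu l n a k <= w ->
  exists i b, (i, b) \in PL /\ (i <= alpha_left l n a k)%N /\
    w * lpow i + b%:R <= psi l n a w.
Proof.
move=> hk hw; set mu0 := Defs.mu l n a k.
have := slope_touch (mu_slope hk); rewrite -/mu0 /alpha_left -/mu0.
case Et: (touch l n a mu0) => [|i0 t] // _ /=.
have : i0 \in touch l n a mu0 by rewrite Et mem_head.
rewrite /touch mem_filter => /andP [/allP Hall i0nz].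
have [[i1 j1] p1in Epsi] := @psi_mem _ l n a ha0 w.
have [i1nz vj1] := PL_nz p1in.
case: (leqP i1 i0) => hi.
  by exists i1, j1; split => //; split => //; rewrite Epsi.
exists i0, (valp (a i0)); split; first exact: nzidx_PL.
split => //; rewrite Epsi /=.
have H := Hall _ i1nz; rewrite /hval in H.
have Hl := lpow_lt hl hi.
have Hv : ((valp (a i1))%:R : rat) <= j1%:R by rewrite ler_nat.
move: H Hl Hv hw; rewrite -/mu0 /Defs.lpow.
set L0 := ((l ^ i0)%:R : rat); set L1 := ((l ^ i1)%:R : rat).
set v0 := ((valp (a i0))%:R : rat); set v1 := ((valp (a i1))%:R : rat).
set J := (j1%:R : rat) => H Hl Hv hw.
nra.
Qed.

Lemma V0_case k w u : (1 <= k <= kappa l n a)%N -> - Defs.mu l n a k <= w ->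
  u \in Vi l n a 0 -> w < u -> k != 1%N /\ - Defs.mu l n a k.-1 <= u.
Proof.
move=> /andP [k1 kk] hw /mapP [x xin ->] wu.
have js : (index x (slopes l n a) < size (slopes l n a))%N by rewrite index_mem.
have Ex : x = nth 0 (slopes l n a) (index x (slopes l n a)) by rewrite nth_index.
have srt := sorted_leq_nth le_trans lexx 0 slopes_sorted.
have kk' : (k.-1 < size (slopes l n a))%N by move: kk k1; rewrite /kappa; clear; case: k.
case: (leqP k.-1 (index x (slopes l n a))) => hj.
  exfalso; have H : Defs.mu l n a k <= x by rewrite Ex; exact: (srt _ _ kk' js hj).
  by move: wu hw H; lra.
split; first by apply/eqP => E; rewrite E in hj.
have kk'' : ((k.-1).-1 < size (slopes l n a))%N by move: kk'; case: (k.-1) => //= m; lia.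
have hj' : (index x (slopes l n a) <= (k.-1).-1)%N by move: hj; case: (k.-1).
rewrite lerN2 {1}Ex /Defs.mu; exact: (srt _ _ js kk'' hj').
Qed.

End Main.

Lemma ar1 (w q c L : rat) : 0 < L -> w < (q - c) / L -> w * L + c < q.
Proof. by move=> L0; rewrite ltr_pdivlMr // => H; lra. Qed.
Lemma ar2 (ps v b L : rat) : 0 < L -> ps < v * L + b -> (ps - b) / L < v.
Proof. by move=> L0 H; rewrite ltr_pdivrMr //; lra. Qed.
Lemma ar3 (ps w b L : rat) : 0 < L -> ps <= w * L + b -> (ps - b) / L <= w.
Proof. by move=> L0 H; rewrite ler_pdivrMr //; lra. Qed.
Lemma ar4 (u' w' v E Z : rat) : 0 < Z -> Z <= E -> u' <= v -> w' < v ->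
  (u' - w') * Z <= (v - w') * E.
Proof.
move=> Z0 ZE uv wv; apply: (@le_trans _ _ ((v - w') * Z)).
  by rewrite ler_pM2r // lerD2r.
by rewrite ler_pM2l // subr_gt0.
Qed.
Lemma ar5 (v ps b La Li : rat) : 0 < La -> 0 < Li ->
  (v - (ps - b) / La) * (La / Li) = (v * La + b - ps) / Li.
Proof. by move=> La0 Li0; field; rewrite !gt_eqF. Qed.
Lemma ar6 (q ps w be Li u : rat) : 0 < Li -> w * Li + be <= ps ->
  (q - be) / Li <= u -> (q - ps) / Li <= u - w.
Proof.
move=> Li0 H1 H2.
have E : (q - be) / Li - w = (q - (w * Li + be)) / Li by field; rewrite gt_eqF.
apply: (@le_trans _ _ ((q - be) / Li - w)); last by rewrite lerD2r.
by rewrite E ler_pM2r ?invr_gt0 // lerD2l lerN2.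
Qed.

Lemma bigminn_le (T : eqType) (r : seq T) (P : pred T) (F : T -> nat) n0 x :
  x \in r -> P x -> (\big[minn/n0]_(y <- r | P y) F y <= F x)%N.
Proof.
elim: r => // y r IH; rewrite in_cons big_cons => /orP [/eqP <-|xr] Px.
  by rewrite Px geq_minl.
case: ifP => _; last exact: IH.
by rewrite geq_min IH ?orbT.
Qed.

Lemma bigmin_le (R : realType) (r : seq rat) (F : rat -> \bar R) x :
  x \in r -> (\big[Order.min/+oo%E]_(y <- r) F y <= F x)%E.
Proof.
elim: r => // y r IH; rewrite in_cons big_cons => /orP [/eqP <-|xr].
  by rewrite ge_min lexx.
by rewrite ge_min IH ?orbT.
Qed.

Section Key.
Variables (K : fieldType) (l n : nat) (a : nat -> {poly K}).
Hypothesis hl : (2 <= l)%N.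
Hypothesis ha0 : a 0%N != 0.
Local Notation PL := (@PL K n a).
Local Notation lpow := (lpow l).

Lemma lr_exprz (z1 z2 : nat) :
  (l%:R : rat) ^ ((z1 : int) - (z2 : int)) = lpow z1 / lpow z2.
Proof.
have l0 : (l%:R : rat) != 0 by rewrite pnatr_eq0; case: l hl.
by rewrite expfzDr // -exprnN !lpowE.
Qed.

Lemma key (R : realType) k w (M : \bar R) :
  (1 <= k <= kappa l n a)%N -> - Defs.mu l n a k <= w ->
  (forall w', w' \in Delta l n a w ->
     (M <= eps l n a R w' *
        ((l%:R : R) ^ ((dww l n a w w' : int) - (alpha_left l n a k : int)))%:E)%E) ->
  (k != 1%N -> (M <= ((ratr (- Defs.mu l n a k.-1 - w) : R))%:E)%E) ->
  (forall x, x \in piPsi l n a w -> x != w -> (M <= ((ratr (x - w) : R))%:E)%E) ->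
  forall d u, u \in Vi l n a d -> w < u -> (M <= ((ratr (u - w) : R))%:E)%E.
Proof.
move=> hk hw H1 H2 H3; elim => [|d IH] u.
  move=> uin wu; have [k1 Hu] := V0_case hl ha0 hk hw uin wu.
  apply: le_trans (H2 k1) _; rewrite lee_fin ler_rat; lra.
move=> /(@Vi_dec _ l n a) [[a' b] [pin [v [vin Eu]]]] wu.
case: (ltgtP w v) => hv.
- apply: le_trans (IH _ vin hv) _; rewrite lee_fin ler_rat lerD2r Eu.
  exact: (@gmap_infl _ l n a hl _ _ pin).
-
  set q := v * lpow a' + b%:R.
  have Euq : u = Defs.pi l n a q by rewrite Eu.
  have [[al be] pin2 Eq] := @pi_mem _ l n a ha0 q.
  have lpa := lpow_gt0 hl a'.
  have lpal := lpow_gt0 hl al.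
  have hq : psi l n a w < q.
    apply: le_lt_trans (@psi_le _ l n a w _ pin2) _.
    by apply: ar1 => //; rewrite -Eq -Euq.
  set w' := (psi l n a w - b%:R) / lpow a'.
  have hvw' : w' < v by apply: ar2.
  have w'D : w' \in Delta l n a w.
    rewrite /Delta mem_filter; apply/andP; split.
      by rewrite lt_eqF // (lt_trans hvw' hv).
    exact: (map_f (fun p : nat * nat => (psi l n a w - (p.2)%:R) / lpow p.1) pin).
  have hd : (dww l n a w w' <= a')%N.
    by apply: (bigminn_le (fun p : nat * nat => p.1) _ pin) => /=.
  have [i [be' [pin3 [hi hpsi]]]] := alpha_pt hl ha0 hk hw.
  have lpi := lpow_gt0 hl i.
  have hu : (q - be'%:R) / lpow i <= u by rewrite Euq; exact: (@pi_ge _ l n a q _ pin3).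
  have := H1 _ w'D.
  case: (@eps_val _ l n a hl ha0 R w') => [[Hn _]|[u' [_ [wu' [Hu' ->]]]]].
    by exfalso; apply: (Hn v) => //; exists d.
  have hu' : u' <= v by apply: Hu' => //; exists d.
  move=> HM; apply: le_trans HM _.
  set z := ((dww l n a w w' : int) - (alpha_left l n a k : int)).
  have ER : ratr ((u' - w') * (l%:R : rat) ^ z) = (ratr (u' - w') : R) * (l%:R : R) ^ z.
    by rewrite rmorphM fmorphXz rmorph_nat.
  rewrite -EFinM -ER lee_fin ler_rat.
  have lr1 : 1 <= (l%:R : rat) by rewrite ler1n; case: (l) hl.
  have hz : z <= (a' : int) - (i : int) by rewrite /z; apply: lerB; rewrite lez_nat.
  have ez : (l%:R : rat) ^ z <= (l%:R : rat) ^ ((a' : int) - (i : int)) by apply: ler_weXz2l.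
  have ez0 : 0 < (l%:R : rat) ^ z by apply: exprz_gt0; apply: lt_le_trans lr1.
  rewrite lr_exprz in ez.
  apply: le_trans (ar4 ez0 ez hu' hvw') _.
  rewrite /w' ar5 //; exact: (ar6 lpi hpsi hu).
-
  apply: H3; last by apply/eqP => E; move: wu; rewrite E ltxx.
  rewrite Eu -hv /gmap; apply: map_f; exact: (map_f (fun p : nat * nat => w * lpow p.1 + (p.2)%:R) pin).
Qed.

End Key.

Definition goodE (R : realType) (x : \bar R) :=
  x = +oo%E \/ exists q : rat, 0 < q /\ x = ((ratr q : R))%:E.

Lemma goodE_min (R : realType) (x y : \bar R) : goodE x -> goodE y -> goodE (Order.min x y).
Proof. by rewrite minEle; case: ifP. Qed.

Lemma goodE_big (R : realType) (r : seq rat) (F : rat -> \bar R) :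
  (forall x, x \in r -> goodE (F x)) -> goodE (\big[Order.min/+oo%E]_(y <- r) F y).
Proof.
elim: r => [|y r IH] H; first by rewrite big_nil; left.
rewrite big_cons; apply: goodE_min; first by apply: H; rewrite mem_head.
by apply: IH => x xr; apply: H; rewrite in_cons xr orbT.
Qed.

Lemma bigmin_le' (R : realType) (r : seq rat) (F : rat -> \bar R) x :
  x \in r -> (\big[Order.min/+oo%E]_(y <- r) F y <= F x)%E.
Proof.
elim: r => // y r IH; rewrite in_cons big_cons => /orP [/eqP <-|xr].
  by rewrite ge_min lexx.
by rewrite ge_min IH ?orbT.
Qed.

Unset Implicit Arguments.

Theorem mainTheorem15 (R : realType) (K : fieldType) (l n : nat)
    (a : nat -> {poly K}) (w : rat) (k : nat) :
  (2 <= l)%N -> (1 <= n)%N -> a 0%N != 0 -> a n != 0 ->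
  - mu l n a (kappa l n a) < w ->
  (1 <= k <= kappa l n a)%N ->
  - mu l n a k <= w ->
  (k != 1%N -> w < - mu l n a k.-1) ->
  let M : \bar R :=
    Order.min
      (\big[Order.min/+oo%E]_(w' <- Delta l n a w)
          (eps l n a R w' *
             ((l%:R : R) ^ ((dww l n a w w' : int) - (alpha_left l n a k : int)))%:E)%E)
      (Order.min
        (if k == 1%N then +oo%E else ((ratr (- mu l n a k.-1 - w) : R))%:E)
        (let s := [seq x <- piPsi l n a w | x != w] in
         if s is [::] then +oo%E else ((ratr (smin s - w) : R))%:E)) in
  (M <= eps l n a R w)%E /\ (0%:E < M)%E /\
  (M = +oo%E \/ exists q : rat, 0 < q /\ M = ((ratr q : R))%:E).
Proof.
move=> hl hn ha0 han hkap hk hw hk1 M.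
have piPsi_ge : forall x, x \in piPsi l n a w -> w <= x.
  move=> x /mapP [q /mapP [p pin ->] ->].
  exact: (@gmap_infl _ l n a hl p w pin).
have H1 : forall w', w' \in Delta l n a w ->
    (M <= eps l n a R w' *
        ((l%:R : R) ^ ((dww l n a w w' : int) - (alpha_left l n a k : int)))%:E)%E.
  move=> w' w'D; rewrite /M ge_min; apply/orP; left.
  exact: (bigmin_le' (fun w' => (eps l n a R w' *
             ((l%:R : R) ^ ((dww l n a w w' : int) - (alpha_left l n a k : int)))%:E)%E) w'D).
have H2 : k != 1%N -> (M <= ((ratr (- mu l n a k.-1 - w) : R))%:E)%E.
  by move=> k1; rewrite /M ge_min; apply/orP; right; rewrite ge_min (negbTE k1) lexx.
have H3 : forall x, x \in piPsi l n a w -> x != w -> (M <= ((ratr (x - w) : R))%:E)%E.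
  move=> x xin xw; have xs : x \in [seq x <- piPsi l n a w | x != w] by rewrite mem_filter xw.
  rewrite /M ge_min; apply/orP; right; rewrite ge_min; apply/orP; right.
  move: (smin_le xs); case: [seq x <- piPsi l n a w | x != w] xs => // y s _ Hs.
  by rewrite lee_fin ler_rat lerD2r.
have hgood : goodE M.
  rewrite /M; apply: goodE_min; [apply: goodE_big => w' _ |apply: goodE_min].
  - case: (@eps_val _ l n a hl ha0 R w') => [[_ ->]|[u' [_ [wu' [_ ->]]]]].
      by left; apply: gt0_mulye; rewrite lte_fin exprz_gt0 // ltr0n; case: (l) hl.
    right; exists ((u' - w') * (l%:R : rat) ^ ((dww l n a w w' : int) - (alpha_left l n a k : int))).
    split; first by rewrite mulr_gt0 ?subr_gt0 // exprz_gt0 // ltr0n; case: (l) hl.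
    by rewrite -EFinM rmorphM fmorphXz rmorph_nat.
  - case: ifP => k1; first by left.
    by right; exists (- mu l n a k.-1 - w); split => //; rewrite subr_gt0 hk1 // k1.
  - have : forall x, x \in [seq x <- piPsi l n a w | x != w] -> w < x.
      by move=> x; rewrite mem_filter => /andP [xw /piPsi_ge]; rewrite lt_neqAle eq_sym xw.
    have := @smin_mem [seq x <- piPsi l n a w | x != w].
    case: [seq x <- piPsi l n a w | x != w] => [|y s] Hm Hall; first by left.
    by right; exists (smin (y :: s) - w); split => //; rewrite subr_gt0 Hall // Hm.
split; last split => //.
  case: (@eps_val _ l n a hl ha0 R w) => [[_ ->]|[u [[d ud] [wu [_ ->]]]]]; first exact: leey.
  exact: (key hl ha0 hk hw H1 H2 H3 ud wu).
by case: hgood => [->|[q [q0 ->]]]; [exact: lt0y|rewrite lte_fin ltr0q].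
Qed.
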